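(* Let $k\ge2$ and $\ell\ge1$ be integers. Let $\Omega_u$ be the set of satisfying assignments of the unrestricted depth-$\ell$ gadget and $\Omega_r$ the set of satisfying assignments of the restricted depth-$\ell$ gadget (on the same variable set). Then $\Omega_r\subseteq\Omega_u$ and $$1-2^{-(k-2)\ell}\le\frac{|\Omega_r|}{|\Omega_u|}\le1-2^{-k\ell}.$$
   Context: Gadgets: take variables $U=\{v_{i,j}: i\in[\ell],j\in[k]\}$ ($\ell$ layers of $k$ variables). For each $i\in\{1,\dots,\ell-1\}$ and $j\in[k]$ let $c_{ij}$ be the clause with $\mathrm{vbl}(c_{ij})=\{v_{i,r}:r\ne j\}\cup\{v_{i+1,j}\}$, forbidding the all-True assignment of these variables if $i$ is odd and the all-False assignment if $i$ is even; let $\mathcal C$ be the set of these $k(\ell-1)$ clauses. Let $c$ be the clause on the first layer $\{v_{1,j}:j\in[k]\}$ forbidding the all-True assignment. The unrestricted depth-$\ell$ gadget is the CNF $(U,\mathcal C)$; the restricted depth-$\ell$ gadget is $(U,\mathcal C\cup\{c\})$. *)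

(* Defs.v *)
(* Variables v_{i,j} are indexed 0-based by 'I_l * 'I_k:
   paper layer i (1-based) = ordinal i-1, paper index j = ordinal j-1. *)
From mathcomp Require Import all_boot all_order all_algebra.
Set Implicit Arguments. Unset Strict Implicit. Unset Printing Implicit Defensive.

Section Gadget.
Variables l k : nat.
Definition var := ('I_l * 'I_k)%type.
Definition assignment := {ffun var -> bool}.

(* a clause with variable set vbl forbidding the constant assignment b is
   violated by s iff s assigns b to every variable of vbl *)
Definition violated (s : assignment) (vbl : {set var}) (b : bool) : bool :=
  [forall x in vbl, s x == b].

Definition cvbl (i : 'I_l) (j : 'I_k) : {set var} :=
  [set x : var | ((x.1 == i) && (x.2 != j)) ||
                 ((x.1 == i.+1 :> nat) && (x.2 == j))].

(* forbidden value: all-True iff paper layer i+1 is odd iff 0-based i even *)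
Definition cforb (i : 'I_l) : bool := ~~ odd i.

(* clauses c_{ij} exist for paper layers 1..l-1, i.e. 0-based i with i+1<l *)
Definition sat_unrestricted (s : assignment) : bool :=
  [forall i : 'I_l, forall j : 'I_k,
     (i.+1 < l) ==> ~~ violated s (cvbl i j) (cforb i)].

Definition cfirst : {set var} := [set x : var | x.1 == 0 :> nat].

Definition sat_restricted (s : assignment) : bool :=
  sat_unrestricted s && ~~ violated s cfirst true.

Definition Omega_u : {set assignment} := [set s | sat_unrestricted s].
Definition Omega_r : {set assignment} := [set s | sat_restricted s].
End Gadget.

(* Main.v *)
Require Import Defs.
From mathcomp Require Import all_boot all_order all_algebra zify.
Import GRing.Theory Num.Theory.
Local Open Scope ring_scope.

Definition altf (l k : nat) : assignment l k := [ffun x => cforb x.1].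

Lemma alt_u l k : altf l k \in Omega_u l k.
Proof.
rewrite inE /sat_unrestricted; apply/forallP => i; apply/forallP => j.
apply/implyP => hi; apply/negP => /forallP /(_ (Ordinal hi, j)).
rewrite !inE /= !eqxx andbF andbT orbT /= ffunE /cforb /=.
by case: (odd i).
Qed.

Lemma alt_notr l k : (0 < l)%N -> altf l k \notin Omega_r l k.
Proof.
move=> hl; rewrite inE /sat_restricted negb_and; apply/orP; right.
rewrite negbK; apply/forallP => x; apply/implyP; rewrite inE ffunE /cforb.
by move/eqP => ->.
Qed.

Lemma diff_alt l k (s : assignment l k) :
  s \in Omega_u l k -> s \notin Omega_r l k -> s = altf l k.
Proof.
rewrite !inE /sat_restricted => hu; rewrite hu /= negbK => /forallP hf.
have key : forall n (i : 'I_l), i = n :> nat -> forall j, s (i, j) = cforb i.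
  elim => [|n IH] i hi j.
    have := hf (i, j); rewrite inE /= hi eqxx /= => /eqP ->.
    by rewrite /cforb hi.
  have hn : (n < l)%N by move: (ltn_ord i); rewrite hi; apply: ltnW.
  move: hu => /forallP /(_ (Ordinal hn)) /forallP /(_ j).
  rewrite -hi ltn_ord /= => hv.
  apply/eqP; apply: contraNT hv => hne.
  apply/forallP => x; apply/implyP; rewrite inE /=.
  case/orP => /andP [/eqP h1 h2].
    by case: x h1 h2 => a b /= -> _; rewrite IH.
  have -> : x = (i, j) by case: x h1 h2 => a b /= h1 /eqP h2; congr pair =>//; apply: val_inj; rewrite /= h1 hi.
  move: hne; rewrite /cforb hi /=; by case: (s (i, j)); case: (odd n).
apply/ffunP => -[i j]; rewrite ffunE; exact: key.
Qed.

Lemma card_u_r l k : (0 < l)%N -> #|Omega_u l k| = (#|Omega_r l k| + 1)%N.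
Proof.
move=> hl.
have sub : Omega_r l k \subset Omega_u l k.
  by apply/subsetP => s; rewrite !inE => /andP [].
have -> : Omega_u l k = Omega_r l k :|: [set altf l k].
  apply/setP => s; rewrite in_setU in_set1; apply/idP/idP.
    move=> hu; case hr: (s \in Omega_r l k) => //=.
    by rewrite (@diff_alt l k s hu) ?hr // eqxx.
  case/orP; first by rewrite !inE => /andP [].
  by move/eqP => ->; exact: alt_u.
rewrite setUC cardsU1 addnC; congr (_ + _)%N.
by rewrite (@alt_notr l k hl).
Qed.

Lemma card_u_up l k : (#|Omega_u l k| <= 2 ^ (k * l))%N.
Proof.
apply: (leq_trans (subset_leq_card (subsetT _))).
by rewrite cardsT card_ffun card_bool card_prod !card_ord mulnC.
Qed.

Lemma card_u_low l k : (2 <= k)%N -> (2 ^ ((k - 2) * l) <= #|Omega_u l k|)%N.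
Proof.
move=> hk.
pose f (g : {ffun 'I_l * 'I_(k - 2) -> bool}) : assignment l k :=
  [ffun x : var l k => if (x.2 < 2)%N then ~~ cforb x.1 else if insub (x.2 - 2)%N is Some j then g (x.1, j) else false].
have finj : injective f.
  move=> g1 g2 e; apply/ffunP => -[i j].
  have hj : (j + 2 < k)%N by have := ltn_ord j; lia.
  have := congr1 (fun h : assignment l k => h (i, Ordinal hj)) e; rewrite /f !ffunE /=.
  rewrite ltnNge leq_addl /= addnK.
  case: insubP => [j0 _ hj0|]; last by rewrite ltn_ord.
  by have -> : j0 = j by apply: val_inj.
have -> : (2 ^ ((k - 2) * l) = #|f @: [set: {ffun 'I_l * 'I_(k - 2) -> bool}]|)%N.
  by rewrite card_imset // cardsT card_ffun card_bool card_prod !card_ord mulnC.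
apply: subset_leq_card; apply/subsetP => _ /imsetP [g _ ->].
rewrite inE /sat_unrestricted; apply/forallP => i; apply/forallP => j.
apply/implyP => _; apply/negP => /forallP hv.
have [j' [hj' hne]] : exists j' : 'I_k, (j' < 2)%N /\ j' != j.
  have h0 : (0 < k)%N by apply: leq_trans hk.
  have h1 : (1 < k)%N by [].
  case: (eqVneq (Ordinal h0) j) => e.
    by exists (Ordinal h1); split => //; rewrite -e.
  by exists (Ordinal h0).
have := hv (i, j'); rewrite inE /= eqxx hne /= /f ffunE /= hj'.
by case: (cforb i).
Qed.

Theorem lemma5p5 (k l : nat) (hk : (2 <= k)%N) (hl : (1 <= l)%N) :
  Omega_r l k \subset Omega_u l k /\
  1 - (2%:R : rat) ^- ((k - 2) * l) <= (#|Omega_r l k|%:R / #|Omega_u l k|%:R : rat) /\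
  (#|Omega_r l k|%:R / #|Omega_u l k|%:R : rat) <= 1 - (2%:R : rat) ^- (k * l).
Proof.
split; first by apply/subsetP => s; rewrite !inE => /andP [].
have hN := @card_u_r l k hl.
have lo := @card_u_low l k hk.
have up := card_u_up l k.
set N := #|Omega_u l k| in hN lo up *.
set M := #|Omega_r l k| in hN *.
have Npos : (0 < N)%N by rewrite hN addn1.
have NposR : 0 < (N%:R : rat) by rewrite ltr0n.
have -> : (M%:R / N%:R : rat) = 1 - (N%:R)^-1.
  have -> : (M%:R : rat) = N%:R - 1 by rewrite hN natrD addrK.
  by rewrite mulrBl divff ?mul1r // pnatr_eq0 -lt0n.
split; rewrite lerD2l lerN2 lef_pV2 ?natrX ?ler_nat //.
all: try by rewrite posrE exprn_gt0.
all: try by rewrite posrE.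
all: by rewrite -natrX ler_nat.
Qed.
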